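(* Let $n\ge3$ be an odd integer. Then the number of edges of $OD(\mathcal{D}_n)$ is $$|E(OD(\mathcal{D}_n))|=\frac12\Big(3n-1+\sum_{\substack{m\mid n\\ m>1}}\Big(m-2\phi(m)+\sum_{\lambda\mid\frac{n}{m}}\phi(\lambda m)\Big)\phi(m)\Big),$$ where $\phi$ is Euler's totient function.
   Context: The dihedral group $\mathcal{D}_n$ ($n\ge3$) is the group $\langle a,b\mid a^n=b^2=(ab)^2=e\rangle$ of order $2n$. For a finite group $G$, $o(x)$ denotes the order of $x\in G$. The order-divisor graph $OD(G)$ is the simple undirected graph with vertex set $G$, in which two distinct vertices $x,y$ are adjacent if and only if $o(x)\neq o(y)$ and either $o(x)\mid o(y)$ or $o(y)\mid o(x)$. *)

(* Defs.v *)
From HB Require Import structures.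
From mathcomp Require Import all_boot all_order all_algebra all_fingroup all_solvable.
Set Implicit Arguments. Unset Strict Implicit. Unset Printing Implicit Defensive.

Definition od_adj (gT : finGroupType) (x y : gT) : bool :=
  [&& x != y, #[x]%g != #[y]%g & (#[x]%g %| #[y]%g) || (#[y]%g %| #[x]%g)].

Definition OD_edges (gT : finGroupType) (G : {set gT}) : {set {set gT}} :=
  [set E : {set gT} | [exists x in G, exists y in G, od_adj x y && (E == [set x; y])]].

(* Main.v *)
Require Import Defs.
From HB Require Import structures.
From mathcomp Require Import all_boot all_order all_algebra all_fingroup all_solvable.
From mathcomp Require Import ring lra zify.
Set Implicit Arguments. Unset Strict Implicit. Unset Printing Implicit Defensive.
Import GRing.Theory.

Lemma card_order_cycle (gT : finGroupType) (a : gT) d :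
  d %| #[a]%g -> #|[set y in <[a]>%g | #[y]%g == d]| = totient d.
Proof.
move=> dd.
have dv: #[a]%g %/ d %| #[a]%g by apply: dvdn_div.
set b := (a ^+ (#[a]%g %/ d))%g.
have ob: #[b]%g = d by rewrite orderXdiv // divnA // mulKn // order_gt0.
rewrite -{2}ob totient_gen; apply: eq_card => y; rewrite !inE /generator.
have := cycle_sub_group dd; set S := [set _ | _] => defS.
apply/idP/idP => [/andP[ya /eqP oy]|/eqP eby].
  have : <[y]>%G \in S by rewrite inE /= cycle_subG ya -orderE oy eqxx.
  by rewrite defS inE => /eqP[->].
have yb : y \in <[b]>%g by rewrite eby cycle_id.
apply/andP; split. exact: (subsetP (cycleX a _)) _ yb.
by rewrite -ob !orderE eby.
Qed.

Lemma sum_order_cycle (gT : finGroupType) (a : gT) (P : pred nat) (F : nat -> nat) :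
  \sum_(h in <[a]>%g | P #[h]%g) F #[h]%g =
  \sum_(d <- divisors #[a]%g | P d) totient d * F d.
Proof.
have ordin h : h \in <[a]>%g -> #[h]%g \in divisors #[a]%g.
  by move=> ha; rewrite -dvdn_divisors ?order_gt0 // orderE order_dvdG.
transitivity (\sum_(d <- divisors #[a]%g | P d)
   \sum_(h | (h \in <[a]>%g) && (#[h]%g == d)) F d); last first.
  rewrite big_seq_cond [RHS]big_seq_cond; apply: eq_bigr => d /andP[dd _].
  rewrite -dvdn_divisors ?order_gt0 // in dd.
  rewrite -(card_order_cycle dd) -sum_nat_const; apply: eq_bigl => h.
  by rewrite inE.
rewrite (exchange_big_dep (fun h => h \in <[a]>%g)) /=; last by move=> d h _ /andP[].
rewrite big_mkcond [RHS]big_mkcond; apply: eq_bigr => h _.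
case ha: (h \in <[a]>%g) => /=; last first.
  by [].

rewrite (big_rem _ (ordin h ha)) /= eqxx !andbT.
rewrite big1_seq ?addn0 // => d /andP[/andP[_ /eqP hd]].
rewrite mem_rem_uniq ?divisors_uniq // inE hd eqxx //.
Qed.

Lemma od_adj_sym (gT : finGroupType) (x y : gT) : od_adj x y = od_adj y x.
Proof. by rewrite /od_adj eq_sym [#[y]%g == _]eq_sym orbC. Qed.

Lemma handshake (gT : finGroupType) :
  2 * #|OD_edges [set: gT]| = \sum_(g : gT) #|[set h | od_adj g h]|.
Proof.
pose P := [set p : gT * gT | od_adj p.1 p.2].
pose f (p : gT * gT) := [set p.1; p.2].
have -> : OD_edges [set: gT] = f @: P.
  apply/setP => E; rewrite inE; apply/existsP/imsetP.
    case=> x /andP[_ /existsP[y /andP[_ /andP[a /eqP ->]]]].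
    by exists (x, y); rewrite ?inE.
  case=> -[x y]; rewrite inE /= => a ->.
  by exists x; rewrite inE; apply/existsP; exists y; rewrite inE a eqxx.
transitivity #|P|.
  rewrite mulnC -sum_nat_const -[#|P|]sum1_card (partition_big_imset f) /=.
  apply: eq_bigr => E /imsetP[[a b]]; rewrite inE /= => ab ->.
  have nab : a != b by case/and3P: ab.
  rewrite (eq_bigl (mem [set (a, b); (b, a)])); last first.
    move=> [x y]; rewrite !inE /= /f /=.
    apply/andP/orP => [[xy /eqP e]|].
      have nxy : x != y by case/and3P: xy.
      have xab : x \in [set a; b] by rewrite -e set21.
      have yab : y \in [set a; b] by rewrite -e set22.
      move: xab yab nxy; rewrite !inE => /orP[]/eqP-> /orP[]/eqP->;
        rewrite ?eqxx //= => _; by [left | right].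
    case=> /eqP[-> ->]; split => //; first by rewrite od_adj_sym.
    by rewrite setUC.
  rewrite sum1_card cards2; case: eqP => // -[e _]; by rewrite e eqxx in nab.
transitivity (\sum_(g : gT) \sum_(h | od_adj g h) 1); last first.
  by apply: eq_bigr => g _; rewrite sum1dep_card.
by rewrite pair_big_dep /= -sum1dep_card.
Qed.

Lemma dihedral_struct n : 1 < n ->
  exists x : 'D_(n.*2), #[x]%g = n /\ forall g : 'D_(n.*2), g \notin <[x]>%g -> #[g]%g = 2.
Proof.
move=> n_gt1.
have := isog_refl ('D_(n.*2))%G.
case/(isoGrpP _ (Grp_dihedral n_gt1)) => _.
case/existsP=> -[x y] /= /eqP[defG xq y2 xy].
have oG : #|[set: 'D_(n.*2)]| = n.*2. by rewrite card_dihedral.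
have {}defG : (<[x]> * <[y]>)%g = [set: 'D_(n.*2)].
  by rewrite -norm_joinEr // norms_cycle xy groupV cycle_id.
have n0 : 0 < n by apply: ltnW.
have notXy : y \notin <[x]>%g.
  apply/negP => Xy.
  have : #|[set: 'D_(n.*2)]| <= n.
    by rewrite -defG mulGSid ?cycle_subG // -orderE dvdn_leq // order_dvdn xq.
  by rewrite oG -addnn leqNgt -{1}[n]addn0 ltn_add2l n0.
have oy : #[y]%g = 2 by apply: nt_prime_order (group1_contra notXy).
have ox : #[x]%g = n.
  have := oG; rewrite -{1}defG TI_cardMg; last first.
    by rewrite setIC prime_TIg ?cycle_subG // -orderE oy.
  by rewrite -!orderE oy muln2 => /double_inj.
exists x; split => // g Xg.
have : g \in [set: 'D_(n.*2)] by rewrite inE.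
rewrite -defG => /mulsgP[u v Xu Yv gE].
case/cycleP: Yv => k vE.
have y1 : (y * y = 1)%g by rewrite -(expgS y 1) y2.
have yV : (y^-1 = y)%g by apply/eqP; rewrite eq_invg_mul y1.
have : v = y \/ v = 1%g.
  rewrite vE -expg_mod_order oy.
  have : k %% 2 < 2 by rewrite ltn_mod.
  by case: (k %% 2) => [|[|//]] _; [right | left].
case=> vy; last first.
  by rewrite gE vy mulg1 Xu in Xg.
apply: nt_prime_order => //; last by apply: contraNneq Xg => ->; rewrite group1.
case/cycleP: Xu => i ui.
have uy : (y * u * y = u^-1)%g.
  by rewrite -{1}yV -mulgA -conjgE ui conjXg xy expgVn.
by rewrite gE vy expgS expg1 -mulgA (mulgA y) uy mulgV.
Qed.

Lemma sum_div_dvd n d (F : nat -> nat) : 0 < n -> 0 < d -> d %| n ->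
  \sum_(e <- divisors n | e %| d) F e = \sum_(e <- divisors d) F e.
Proof.
move=> n0 d0 dn; rewrite -big_filter; apply: perm_big; apply: uniq_perm.
- by rewrite filter_uniq ?divisors_uniq.
- exact: divisors_uniq.
move=> e; rewrite mem_filter -!dvdn_divisors //.
by apply/andP/idP => [[]//|ed]; split => //; apply: dvdn_trans dn.
Qed.

Lemma sum_totient_divisors d : 0 < d -> \sum_(e <- divisors d) totient e = d.
Proof.
move=> d0; rewrite -{2}(sum_totient_dvd d). rewrite -(big_mkord (fun e => e %| d)) -[RHS]big_filter.
apply: perm_big; apply: uniq_perm.
- exact: divisors_uniq.
- by rewrite filter_uniq ?iota_uniq.
move=> e; rewrite mem_filter mem_iota -dvdn_divisors //= add0n ltnS.
by apply/idP/andP => [ed|[]//]; split => //; apply: dvdn_leq.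
Qed.

Lemma sum_mult n d (F : nat -> nat) : 0 < n -> 0 < d -> d %| n ->
  \sum_(e <- divisors n | d %| e) F e = \sum_(l <- divisors (n %/ d)) F (l * d).
Proof.
move=> n0 d0 dn.
have nd0 : 0 < n %/ d by rewrite divn_gt0 // dvdn_leq.
rewrite -big_filter -(big_map (fun l => l * d) xpredT).
apply: perm_big; apply: uniq_perm.
- by rewrite filter_uniq ?divisors_uniq.
- rewrite map_inj_uniq ?divisors_uniq // => a b /eqP.
  by rewrite eqn_pmul2r // => /eqP.
move=> e; rewrite mem_filter -dvdn_divisors //.
apply/andP/mapP => [[de en]|[l]].
  exists (e %/ d); last by rewrite divnK.
  by rewrite -dvdn_divisors // -(dvdn_pmul2r d0) !divnK.
rewrite -dvdn_divisors // => ln ->; split; first exact: dvdn_mull.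
by rewrite -{1}(divnK dn) dvdn_pmul2r.
Qed.


Lemma big_eq1 (s : seq nat) d (F : nat -> nat) : uniq s -> d \in s ->
  \sum_(e <- s | e == d) F e = F d.
Proof.
move=> us ds; rewrite (big_rem _ ds) eqxx big1_seq; first by rewrite /= addn0.
move=> e /andP[/eqP -> ].
by rewrite mem_rem_uniq // inE eqxx.
Qed.

Lemma main_nat n : 2 < n -> odd n -> exists D : nat -> nat,
  (2 * #|OD_edges [set: 'D_(n.*2)]| + 1 = 3 * n + \sum_(d <- divisors n | 1 < d) D d * totient d) /\
  forall d, d \in divisors n -> 1 < d ->
    D d + 2 * totient d = d + \sum_(l <- divisors (n %/ d)) totient (l * d).
Proof.
move=> n3 nodd.
have n1 : (1 < n)%N by apply: leq_trans n3.
have n0 : (0 < n)%N by apply: ltnW.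
have [x [ox ord2]] := dihedral_struct n1.
have cardT : #|'D_(n.*2)| = n.*2 by rewrite -cardsT card_dihedral.
have oddX h : h \in <[x]>%g -> odd #[h]%g.
  move=> hx; apply: dvdn_odd nodd; have := order_dvdG hx; by rewrite -orderE ox.
have ar m : odd m -> (1 < m)%N -> (m %| 2) = false /\ (2 %| m) = false.
  move=> om m1; rewrite dvdn2 om; split => //; apply/negP => /(dvdn_leq (isT : 0 < 2)) m2.
  have m2' : m = 2 by apply/eqP; rewrite eqn_leq m2 m1.
  by rewrite m2' in om.
pose D d := #|[set h in <[x]>%g | (#[h]%g != d) && ((#[h]%g %| d) || (d %| #[h]%g))]|.
have deg1 : #|[set h | od_adj (1%g : 'D_(n.*2)) h]| = (n.*2).-1.
  transitivity #|[set~ (1%g : 'D_(n.*2))]|; last by rewrite cardsC1 cardT.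
  apply: eq_card => h.
  rewrite !inE /od_adj order1.
  by rewrite dvd1n /= andbT [_ == #[h]%g]eq_sym order_eq1 [1%g == h]eq_sym andbb.
have degX g : g \in <[x]>%g -> (1 < #[g]%g)%N -> #|[set h | od_adj g h]| = D #[g]%g.
  move=> gx g1; apply: eq_card => h; rewrite !inE /od_adj.
  case hx : (h \in <[x]>%g) => /=.
    case: (eqVneq g h) => [<-|_]; first by rewrite !eqxx.
    by rewrite [#[g]%g == _]eq_sym orbC.
  have [a1 a2] := ar _ (oddX g gx) g1.
  by rewrite (ord2 h) ?hx // a1 a2 /= !andbF.
have degNX g : g \notin <[x]>%g -> #|[set h | od_adj g h]| = 1%N.
  move=> gx; rewrite -(cards1 (1%g : 'D_(n.*2))); apply: eq_card => h.
  rewrite !inE /od_adj (ord2 g gx).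
  case: (eqVneq h 1%g) => [->|h1].
    have g1 : g != 1%g by apply: contraNneq gx => ->; rewrite group1.
    by rewrite order1 dvd1n orbT g1.
  case hx : (h \in <[x]>%g).
    have h1' : (1 < #[h]%g)%N by rewrite order_gt1.
    have [a1 a2] := ar _ (oddX h hx) h1'.
    by rewrite a1 a2 !andbF.
  by rewrite (ord2 h) ?hx // eqxx andbF.
have H2 : (2 * #|OD_edges [set: 'D_(n.*2)]| =
    (n.*2).-1 + n + \sum_(d <- divisors n | (1 < d)%N) totient d * D d)%N.
  rewrite handshake (bigID (fun g => g \in <[x]>%g)) /=.
  have -> : (\sum_(g | g \notin <[x]>%g) #|[set h | od_adj g h]| = n)%N.
    rewrite (eq_bigr (fun _ => 1%N)); last by move=> g gx; exact: degNX.
    rewrite sum1dep_card.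
    have := cardsC <[x]>%g; rewrite cardT -orderE ox.
    have -> : #|~: <[x]>%g| = #|[set g | g \notin <[x]>%g]|.
      by apply: eq_card => g; rewrite !inE.
    move=> h; apply/eqP; rewrite -(eqn_add2l n) h addnn //.
  rewrite (bigID (fun g => (1 < #[g]%g)%N)) /=.
  rewrite [X in (_ + X + _)%N](big_pred1 1%g); last first.
    by move=> g; rewrite /= order_gt1 negbK andbC; case: eqP => // ->; rewrite group1.
  rewrite deg1.
  rewrite (eq_bigr (fun g => D #[g]%g)); last by move=> g /andP[gx g1]; exact: degX.
  rewrite (sum_order_cycle x (fun d => (1 < d)%N) D) ox.
  lia.
have HD d : d \in divisors n -> (1 < d)%N ->
    (D d + 2 * totient d = d + \sum_(l <- divisors (n %/ d)) totient (l * d))%N.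
  move=> dn' d1; have d0 : (0 < d)%N by apply: ltnW.
  have dn : d %| n by rewrite dvdn_divisors.
  have E1 := sum_order_cycle x (fun m => (m != d) && ((m %| d) || (d %| m))) (fun _ => 1%N).
  rewrite /= ox in E1.
  rewrite /D -sum1dep_card E1.
  have S1 : (\sum_(e <- divisors n | e %| d) totient e)%N = d.
    by rewrite sum_div_dvd // sum_totient_divisors.
  transitivity (\sum_(e <- divisors n | e %| d) totient e +
                \sum_(e <- divisors n | d %| e) totient e)%N; last first.
    by rewrite S1 sum_mult.
  rewrite -(big_eq1 (fun e => 2 * totient e)%N (divisors_uniq n) dn').
  rewrite (big_mkcond (fun e => (e != d) && _)) (big_mkcond (fun e => e == d)).
  rewrite (big_mkcond (fun e => e %| d)) (big_mkcond (fun e => d %| e)).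
  rewrite -!big_split /=; apply: eq_bigr => e _.
  case: (eqVneq e d) => [->|ne].
    by rewrite /= dvdnn add0n mul2n addnn.
  have : ~~ ((e %| d) && (d %| e)) by rewrite -eqn_dvd.
  by case: (e %| d); case: (d %| e) => //= _; rewrite ?addn0 ?add0n ?muln1.
exists D; split => //.
rewrite H2; under eq_bigr do rewrite mulnC. lia.
Qed.

Local Open Scope ring_scope.

Theorem mainTheorem19 (n : nat) : (3 <= n)%N -> odd n ->
  (#|OD_edges [set: 'D_(n.*2)]|)%:Q =
  (1 / 2) * ((3 * n)%:Q - 1 +
    \sum_(m <- divisors n | (1 < m)%N)
      ((m%:Q - 2 * (totient m)%:Q +
        \sum_(l <- divisors (n %/ m)) (totient (l * m))%:Q) * (totient m)%:Q)).
Proof.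
move=> n3 nodd.
have [D [H3 HD]] := main_nat n3 nodd.
rewrite big_seq_cond.
rewrite (eq_bigr (fun m => ((D m * totient m)%N)%:Q)); last first.
  move=> m /andP[mn m1]; have := HD m mn m1 => /(congr1 (fun k : nat => k%:Q)).
  rewrite !(PoszD, PoszM, intrD, intrM) sumMz => h.
  have -> : (D m)%:Q = (m%:Q + \sum_(l <- divisors (n %/ m)) (totient (l * m))%:Q
                          - 2%:Q * (totient m)%:Q) by rewrite -h; ring.
  ring.
rewrite -big_seq_cond -sumMz.
have := congr1 (fun k : nat => k%:Q) H3; rewrite /= !(PoszD, PoszM, intrD, intrM) => h.
lra.
Qed.
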